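(* Let $p$ be a prime and let $A_p$ be a non-zero $p$-primary Abelian group. Then $\mathrm{End}\,A_p$ is centrally essential if and only if $A_p\cong Z_{p^k}$ for some positive integer $k$ or $A_p\cong Z_{p^\infty}$.
   Context: All rings are associative with non-zero identity. A ring $R$ is centrally essential if for every non-zero $a\in R$ there exist non-zero elements $x,y$ of the center of $R$ with $ax=y$. $Z_{p^k}$ is the cyclic group of order $p^k$ and $Z_{p^\infty}$ is the quasi-cyclic (Prüfer) $p$-group. *)

(* Defs.v *)
From mathcomp Require Import all_boot all_order all_algebra all_field.
Set Implicit Arguments. Unset Strict Implicit. Unset Printing Implicit Defensive.
Import GRing.Theory Num.Theory.
Local Open Scope ring_scope.

(* Additive endomorphisms of an abelian group G : zmodType form the ring End G
   (multiplication = composition).  Elements of End G are additive maps G -> G,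
   compared extensionally. *)
Definition is_endo (G : zmodType) (f : G -> G) : Prop :=
  forall x y, f (x + y) = f x + f y.

Definition endo_zero (G : zmodType) (f : G -> G) : Prop := forall x, f x = 0.

Definition endo_central (G : zmodType) (f : G -> G) : Prop :=
  is_endo f /\ forall g : G -> G, is_endo g -> forall x, f (g x) = g (f x).

Definition End_centrally_essential (G : zmodType) : Prop :=
  forall a : G -> G, is_endo a -> ~ endo_zero a ->
    exists x y : G -> G,
      [/\ endo_central x, endo_central y, ~ endo_zero x, ~ endo_zero y
        & forall v, a (x v) = y v].

Definition p_primary (p : nat) (G : zmodType) : Prop :=
  forall x : G, exists n : nat, x *+ (p ^ n) = 0.

(* G is isomorphic to the cyclic group Z_{p^k} = 'Z_(p^k) (for p prime, k > 0,
   p^k >= 2 so 'Z_(p^k) is genuinely Z/p^kZ). *)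
Definition iso_Zpk (p k : nat) (G : zmodType) : Prop :=
  exists f : G -> 'Z_(p ^ k),
    (forall x y, f (x + y) = f x + f y) /\ bijective f.

(* G is isomorphic to the quasi-cyclic group Z_{p^oo}, realised as the
   multiplicative group of all complex p-power roots of unity. *)
Definition iso_Zpinf (p : nat) (G : zmodType) : Prop :=
  exists f : G -> algC,
    [/\ forall x y, f (x + y) = f x * f y,
        injective f
      & forall z : algC, (exists n : nat, z ^+ (p ^ n) = 1) <-> exists x, f x = z].

(* Main.v *)
Require Import Defs.
From mathcomp Require Import all_boot all_order all_algebra all_field.
From mathcomp Require classical_sets.
From Stdlib Require Import Classical ClassicalEpsilon.
From mathcomp Require Import zify.
Set Implicit Arguments. Unset Strict Implicit. Unset Printing Implicit Defensive.
Import GRing.Theory Num.Theory.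
Local Open Scope ring_scope.

Lemma ord_dvd (p n : nat) (Q : nat -> Prop) : prime p ->
  Q 0%N -> (forall a b, Q a -> Q b -> Q (a + b)%N) ->
  (forall a b, Q (a + b)%N -> Q a -> Q b) ->
  Q (p ^ n.+1)%N -> ~ Q (p ^ n)%N -> forall j, Q j <-> (p ^ n.+1 %| j)%N.
Proof.
move=> hp Q0 QD QB Qn Qn' .
have QM : forall a k, Q a -> Q (k * a)%N.
  move=> a k Qa; elim: k => [|k IH]; first by rewrite mul0n.
  by rewrite mulSn; apply: QD.
move=> j; split; last first.
  by move=> /dvdnP [k ->]; apply: QM.
move=> Qj.
have [->|jpos] := posnP j; first exact: dvdn0.
have [km kn E _] := egcdnP (p ^ n.+1)%N jpos.
have Qg : Q (gcdn j (p ^ n.+1)).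
  apply: (QB (kn * p ^ n.+1)%N); first by rewrite -E; apply: QM.
  exact: QM.
have : (gcdn j (p ^ n.+1) %| p ^ n.+1)%N by apply: dvdn_gcdr.
case/(dvdn_pfactor _ _ hp) => m hm hg.
move: hm; rewrite leq_eqVlt => /orP [/eqP em| hm].
  by rewrite -em -hg dvdn_gcdl.
exfalso; apply: Qn'.
have -> : (p ^ n = p ^ (n - m) * p ^ m)%N by rewrite -expnD subnK.
by apply: QM; rewrite -hg.
Qed.

Section Basics.
Variable G : zmodType.

Lemma endo0 (f : G -> G) : is_endo f -> f 0 = 0.
Proof. move=> hf; apply: (@addrI _ (f 0)); by rewrite addr0 -hf addr0. Qed.

Lemma endoMn (f : G -> G) x n : is_endo f -> f (x *+ n) = f x *+ n.
Proof. move=> hf; elim: n => [|n IH]; first by rewrite !mulr0n endo0.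
by rewrite !mulrS hf IH. Qed.

Lemma endoN (f : G -> G) x : is_endo f -> f (- x) = - f x.
Proof. move=> hf; apply/eqP; rewrite -subr_eq0 opprK -hf addNr endo0 //. Qed.

Lemma endoB (f : G -> G) x y : is_endo f -> f (x - y) = f x - f y.
Proof. by move=> hf; rewrite hf endoN. Qed.

End Basics.

Section Order.
Variables (G : zmodType) (p : nat).
Hypothesis hp : prime p.

Definition exact (n : nat) (e : G) := e *+ (p ^ n.+1) = 0 /\ e *+ (p ^ n) <> 0.

Lemma exact_dvd n e : exact n e -> forall j, e *+ j = 0 <-> (p ^ n.+1 %| j)%N.
Proof.
case=> h1 h2; apply: (ord_dvd (Q := fun j => e *+ j = 0)) => //.
- by move=> a b /= ha hb; rewrite mulrnDr ha hb addr0.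
- by move=> a b /=; rewrite mulrnDr => h ha; move: h; rewrite ha add0r.
Qed.

Lemma mulrn_mod (x : G) N a : x *+ N = 0 -> x *+ a = x *+ (a %% N).
Proof.
move=> hN; rewrite {1}(divn_eq a N) mulrnDr mulrnA.
by rewrite -mulrnA mulnC mulrnA hN mul0rn add0r.
Qed.

Lemma exact_eqmod n e : exact n e -> forall a b,
  e *+ a = e *+ b <-> (a = b %[mod p ^ n.+1])%N.
Proof.
move=> he.
suff H : forall a b, (a <= b)%N -> e *+ a = e *+ b <-> (a = b %[mod p ^ n.+1])%N.
  move=> a b; case: (leqP a b) => hab; first exact: H.
  have [H1 H2] := H b a (ltnW hab).
  by split=> h; [apply/esym/H1/esym | apply/esym/H2/esym].
move=> a b hab.
have -> : e *+ b = e *+ a + e *+ (b - a) by rewrite -mulrnDr subnKC.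
split.
  move=> h; apply/eqP; rewrite eq_sym eqn_mod_dvd //; apply: (proj1 (exact_dvd he (b - a)%N)).
  by apply: (@addrI _ (e *+ a)); rewrite -h addr0.
move/eqP; rewrite eq_sym eqn_mod_dvd // => h; by rewrite (proj2 (exact_dvd he (b - a)%N) h) addr0.
Qed.

Definition soc1 := forall s t : G, s *+ p = 0 -> t *+ p = 0 -> s != 0 ->
  exists i, t = s *+ i.

Lemma cyc_sub : soc1 -> forall n e, exact n e ->
  forall x, x *+ (p ^ n.+1) = 0 -> exists i, x = e *+ i.
Proof.
move=> hs; elim=> [|n IH] e he x hx.
  case: he; rewrite expn1 expn0 mulr1n => h1 h2.
  apply: hs; [by [] | by rewrite -(expn1 p) | by apply/eqP].
have he' : exact n (e *+ p).
  case: he => h1 h2; split; by rewrite -mulrnA -expnS.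
have [m hm] : exists m, x *+ p = e *+ p *+ m.
  by apply: IH => //; rewrite -mulrnA -expnS.
have hy : (x - e *+ m) *+ p = 0 by rewrite mulrnBl hm mulrnAC subrr.
have hsoc : e *+ p ^ n.+1 *+ p = 0 by case: he => h1 _; rewrite -mulrnA -expnSr.
have hnz : e *+ p ^ n.+1 != 0 by case: he => _ h2; apply/eqP.
have [j hj] := hs _ _ hsoc hy hnz.
exists (m + p ^ n.+1 * j)%N.
by rewrite mulrnDr mulrnA -hj addrC subrK.
Qed.

End Order.

Lemma addfMn (G H : zmodType) (f : G -> H) x n :
  (forall x y, f (x + y) = f x + f y) -> f (x *+ n) = f x *+ n.
Proof.
move=> hf.
have f0 : f 0 = 0 by apply: (@addrI _ (f 0)); rewrite addr0 -hf addr0.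
elim: n => [|n IH]; first by rewrite !mulr0n f0.
by rewrite !mulrS hf IH.
Qed.

Lemma comm_of_cyc (G : zmodType) :
  (forall x : G, exists e, (exists i, x = e *+ i) /\
      forall g : G -> G, is_endo g -> exists a, g e = e *+ a) ->
  forall g h : G -> G, is_endo g -> is_endo h -> forall x, g (h x) = h (g x).
Proof.
move=> H g h hg hh x.
have [e [[i ->] He]] := H x.
have [a ha] := He g hg; have [b hb] := He h hh.
rewrite !endoMn // ha hb !endoMn // ha hb -!mulrnA.
by rewrite mulnA (mulnC a b) -mulnA.
Qed.

Lemma CE_of_comm (G : zmodType) : (exists x : G, x != 0) ->
  (forall g h : G -> G, is_endo g -> is_endo h -> forall x, g (h x) = h (g x)) ->
  End_centrally_essential G.
Proof.
move=> [x0 hx0] Hc a ha hna.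
exists id, a; split.
- by split=> //.
- split; first exact: ha.
  move=> g hg v; exact: (Hc a g ha hg).
- by move=> h; move/eqP: hx0; apply; exact: (h x0).
- exact: hna.
- by [].
Qed.

Lemma cyc_of_Zpk (p k : nat) (G : zmodType) : prime p -> (0 < k)%N ->
  iso_Zpk p k G ->
  forall x : G, exists e, (exists i, x = e *+ i) /\
      forall g : G -> G, is_endo g -> exists a, g e = e *+ a.
Proof.
move=> hp hk [f [hf [f' c1 c2]]].
set e := f' 1.
have key : forall y, y = e *+ val (f y).
  move=> y; apply: (can_inj c1).
  by rewrite (addfMn _ _ hf) /e c2 natr_Zp.
move=> x; exists e; split; first by exists (val (f x)).
move=> g hg; exists (val (f (g e))); exact: key.
Qed.

Lemma cyc_of_Zpinf (p : nat) (G : zmodType) : prime p -> p_primary p G ->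
  iso_Zpinf p G ->
  forall x : G, exists e, (exists i, x = e *+ i) /\
      forall g : G -> G, is_endo g -> exists a, g e = e *+ a.
Proof.
move=> hp hG [f [hf finj him]].
have f0 : f 0 = 1.
  have [x1 hx1] : exists x, f x = 1 by apply/him; exists 0%N; rewrite expr1n.
  by apply: (@mulfI _ (f x1)); [rewrite hx1 oner_eq0 | rewrite -hf addr0 mulr1].
have fMn : forall y n, f (y *+ n) = f y ^+ n.
  move=> y; elim=> [|n IH]; first by rewrite mulr0n f0 expr0.
  by rewrite mulrS hf IH exprS.
move=> x; have [n hn] := hG x.
have [z hz] := (@C_prim_root_exists (p ^ n)%N (ltac:(by rewrite expn_gt0 prime_gt0))).
have [e he] : exists e, f e = z.
  by apply/him; exists n; apply: prim_expr_order.
have Hsub : forall y, y *+ (p ^ n) = 0 -> exists i, y = e *+ i.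
  move=> y hy.
  have hy1 : f y ^+ (p ^ n) = 1 by rewrite -fMn hy f0.
  have [i hi] := prim_rootP hz hy1.
  by exists i; apply: finj; rewrite fMn he.
have he0 : e *+ (p ^ n) = 0.
  by apply: finj; rewrite fMn he f0 prim_expr_order.
exists e; split; first exact: Hsub.
move=> g hg; apply: Hsub; by rewrite -endoMn // he0 endo0.
Qed.

Lemma back_dir (p : nat) (G : zmodType) :
  prime p -> p_primary p G -> (exists x : G, x != 0) ->
  ((exists k : nat, (0 < k)%N /\ iso_Zpk p k G) \/ iso_Zpinf p G) ->
  End_centrally_essential G.
Proof.
move=> hp hG hnz H; apply: (CE_of_comm hnz); apply: comm_of_cyc.
case: H => [[k [hk hi]]|hi]; first exact: (cyc_of_Zpk hp hk).
exact: (cyc_of_Zpinf hp hG hi).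
Qed.

Lemma ex_min (P : nat -> Prop) : (exists n, P n) ->
  exists n, P n /\ forall m, (m < n)%N -> ~ P m.
Proof.
move=> [n hn]; apply: NNPP => hno.
have H : forall k m, (m <= k)%N -> ~ P m.
  elim=> [|k IH] m hm.
    by move: hm; rewrite leqn0 => /eqP -> h0; apply: hno; exists 0%N; split.
  move: hm; rewrite leq_eqVlt => /orP [/eqP -> hk|]; last by apply: IH.
  apply: hno; exists k.+1; split=> // m' hm'; apply: IH.

exact: (H n n (leqnn n) hn).
Qed.


Section MOrder.
Variable p : nat.
Hypothesis hp : prime p.

Definition mexact (n : nat) (z : algC) := z ^+ (p ^ n.+1) = 1 /\ z ^+ (p ^ n) <> 1.

Lemma mexact_dvd n z : mexact n z -> forall j, z ^+ j = 1 <-> (p ^ n.+1 %| j)%N.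
Proof.
case=> h1 h2; apply: (ord_dvd (Q := fun j => z ^+ j = 1)) => //.
- by move=> a b /= ha hb; rewrite exprD ha hb mulr1.
- by move=> a b /=; rewrite exprD => h ha; move: h; rewrite ha mul1r.
Qed.

Lemma mexact_neq0 n z : mexact n z -> z != 0.
Proof.
case=> h1 _; apply/eqP => z0; move: h1; rewrite z0 expr0n.
have hpn : (p ^ n.+1 == 0)%N = false by apply/negbTE; rewrite -lt0n expn_gt0 prime_gt0.
by rewrite hpn => /eqP; rewrite eq_sym oner_eq0.
Qed.

Lemma mexact_eqmod n z : mexact n z -> forall a b,
  z ^+ a = z ^+ b <-> (a = b %[mod p ^ n.+1])%N.
Proof.
move=> he.
have zn0 := mexact_neq0 he.
suff H : forall a b, (a <= b)%N -> z ^+ a = z ^+ b <-> (a = b %[mod p ^ n.+1])%N.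
  move=> a b; case: (leqP a b) => hab; first exact: H.
  have [H1 H2] := H b a (ltnW hab).
  by split=> h; [apply/esym/H1/esym | apply/esym/H2/esym].
move=> a b hab.
have -> : z ^+ b = z ^+ a * z ^+ (b - a) by rewrite -exprD subnKC.
split.
  move=> h; apply/eqP; rewrite eq_sym eqn_mod_dvd //.
  apply: (proj1 (mexact_dvd he (b - a)%N)).
  by apply: (mulfI (expf_neq0 a zn0)); rewrite -h mulr1.
move/eqP; rewrite eq_sym eqn_mod_dvd // => h.
by rewrite (proj2 (mexact_dvd he (b - a)%N) h) mulr1.
Qed.

Lemma mexact_prim n z : mexact n z -> (p ^ n.+1).-primitive_root z.
Proof.
move=> he.
have hpos : (0 < p ^ n.+1)%N by rewrite expn_gt0 prime_gt0.
have [m hm hmd] := prim_order_exists hpos (proj1 he).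
have hm1 := prim_expr_order hm.
have : (p ^ n.+1 %| m)%N by apply/(mexact_dvd he).
move=> hd; have -> : (p ^ n.+1 = m)%N by apply/eqP; rewrite eqn_dvd hd hmd.
exact: hm.
Qed.

End MOrder.

Section Fwd.
Variables (G : zmodType) (p : nat).
Hypothesis hp : prime p.
Hypothesis hG : p_primary p G.
Hypothesis hs : soc1 G p.

Lemma exact_of (y : G) n : y *+ (p ^ n) <> 0 -> exists z : G, exact p n z.
Proof.
move=> hy.
have [M [hM hmin]] := ex_min (hG y).
have hnM : (n < M)%N.
  rewrite ltnNge; apply/negP => hMn; apply: hy.
  by rewrite -(subnKC hMn) expnD mulrnA hM mul0rn.
have e1 : (M.-1 - n + n.+1 = M)%N by lia.
have e2 : (M.-1 - n + n = M.-1)%N by lia.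
exists (y *+ p ^ (M.-1 - n)); split.
  by rewrite -mulrnA -expnD e1.
rewrite -mulrnA -expnD e2.
apply: hmin; lia.
Qed.

Lemma bounded_case : (exists x : G, x != 0) -> (exists N, forall x : G, x *+ (p ^ N) = 0) ->
  exists k, (0 < k)%N /\ iso_Zpk p k G.
Proof.
move=> [x0 hx0] hb.
have [N [hN hmin]] := ex_min hb.
case: N hN hmin => [|n] hN hmin.
  by move: hx0; rewrite -(mulr1n x0) -(expn0 p) hN eqxx.
have [y hy] : exists y : G, y *+ (p ^ n) <> 0.
  apply: NNPP => h; apply: (hmin n (ltnSn n)) => x; apply: NNPP => hx; apply: h.
  by exists x.
have [e he] := exact_of hy.
have hall : forall x, exists i, x = e *+ i by move=> x; apply: (cyc_sub hs he).
set q := (p ^ n.+1)%N.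
have hq : (1 < q)%N by rewrite /q -(expn0 p) ltn_exp2l ?prime_gt1.
pose g (i : 'Z_q) := e *+ val i.
have hcast : (Zp_trunc q).+2 = q by rewrite Zp_cast.
have ginj : injective g.
  move=> i j; rewrite /g => /(exact_eqmod hp he).
  have ltq : forall k : 'Z_q, (val k < q)%N.
    by move=> k; apply: (leq_trans (ltn_ord k)); rewrite hcast.
  rewrite !modn_small ?ltq // => hij; exact: val_inj.
have gsurj : forall x, exists i, g i = x.
  move=> x; have [a ->] := hall x; exists (inZp a); rewrite /g /=.
  rewrite hcast; apply/esym; apply: mulrn_mod; by case: he.
pose f (x : G) := odflt 0 [pick i | g i == x].
have gf : forall x, g (f x) = x.
  move=> x; rewrite /f; case: pickP => [i /eqP //|none].
  by have [i hi] := gsurj x; move: (none i); rewrite hi eqxx.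
have fg : forall i, f (g i) = i by move=> i; apply: ginj; rewrite gf.
exists n.+1; split=> //; exists f; split; last by exists g.
have eq0 : e *+ (Zp_trunc q).+2 = 0 by rewrite hcast; case: he.
move=> x1 y1; apply: ginj; rewrite gf /g /= -(mulrn_mod _ eq0).
by rewrite mulrnDr -/(g (f x1)) -/(g (f y1)) !gf.
Qed.


Hypothesis hunb : forall N, exists x : G, x *+ (p ^ N) <> 0.

Lemma step n (e : G) : exact p n e -> exists e', exact p n.+1 e' /\ e' *+ p = e.
Proof.
move=> he.
have [y hy] := hunb n.+1.
have [z hz] := exact_of hy.
have hz' : exact p n (z *+ p).
  by case: hz => h1 h2; split; rewrite -mulrnA -expnS.
have [i hi] : exists i, e = z *+ p *+ i.
  apply: (cyc_sub hs hz'); by case: he.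
exists (z *+ i); split; last by rewrite mulrnAC.
case: hz => h1 h2; split.
  by rewrite mulrnAC h1 mul0rn.
rewrite expnS mulrnA (mulrnAC z i p) -hi; by case: he.
Qed.

Lemma unbounded_case : (exists x : G, x != 0) -> iso_Zpinf p G.
Proof.
move=> [x0 hx0].
pose h n e := epsilon (inhabits (0 : G))
   (fun e' => exact p n e -> exact p n.+1 e' /\ e' *+ p = e).
have hh : forall n e, exact p n e -> exact p n.+1 (h n e) /\ h n e *+ p = e.
  move=> n e he; apply: (epsilon_spec (inhabits (0 : G))
   (fun e' => exact p n e -> exact p n.+1 e' /\ e' *+ p = e)) => //.
  by have [e' he'] := step he; exists e'.
have [s hs0] : exists s : G, exact p 0 s.
  by apply: (@exact_of x0 0%N); rewrite expn0 mulr1n; apply/eqP.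
pose es := nat_rect (fun _ => G) s (fun m em => h m em).
have hes : forall n, exact p n (es n).
  by elim=> [|n IH] //=; apply: (proj1 (hh _ _ IH)).
have hesp : forall n, es n.+1 *+ p = es n.
  by move=> n; apply: (proj2 (hh _ _ (hes n))).
have hp0 : (0 < p)%N by rewrite prime_gt0.
have [z0 hz0] := C_prim_root_exists hp0.
pose zs := nat_rect (fun _ => algC) z0 (fun m zm => p.-root zm).
have hzsp : forall n, zs n.+1 ^+ p = zs n by move=> n /=; rewrite rootCK.
have hzs : forall n, mexact p n (zs n).
  elim=> [|n [IH1 IH2]].
    split; rewrite /= ?expn1 ?expn0 ?expr1; first exact: prim_expr_order.
    move=> h1; have := eq_prim_root_expr hz0 1 0; rewrite expr1 expr0 h1 eqxx.
    by rewrite modn_small ?prime_gt1 // modn_small ?prime_gt0.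
  split; by rewrite expnS exprM hzsp.
have es_lift : forall n k, es n = es (k + n)%N *+ p ^ k.
  move=> n; elim=> [|k IH]; first by rewrite expn0 mulr1n.
  have -> : (k.+1 + n = (k + n).+1)%N by [].
  by rewrite IH -(hesp (k + n)%N) expnS mulrnA mulrnAC.
have zs_lift : forall n k, zs n = zs (k + n)%N ^+ (p ^ k).
  move=> n; elim=> [|k IH]; first by rewrite add0n expn0 expr1.
  have -> : (k.+1 + n = (k + n).+1)%N by [].
  by rewrite IH -(hzsp (k + n)%N) expnS exprM exprAC.
pose R x z := exists n i, x = es n *+ i /\ z = zs n ^+ i.
have Rlift : forall n i m j, exists K a b,
    [/\ es n *+ i = es K *+ a, zs n ^+ i = zs K ^+ a,
        es m *+ j = es K *+ b & zs m ^+ j = zs K ^+ b].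
  move=> n i m j; exists (m + n)%N, (p ^ m * i)%N, (p ^ n * j)%N; split.
  - by rewrite {1}(es_lift n m) mulrnA.
  - by rewrite {1}(zs_lift n m) exprM.
  - by rewrite addnC {1}(es_lift m n) mulrnA.
  - by rewrite addnC {1}(zs_lift m n) exprM.
have Req : forall x y z1 z2, R x z1 -> R y z2 -> (x = y <-> z1 = z2).
  move=> x y z1 z2 [n [i [-> ->]]] [m [j [-> ->]]].
  have [K [a [b [e1 e2 e3 e4]]]] := Rlift n i m j.
  rewrite e1 e2 e3 e4.
  split=> hq.
    by apply/(mexact_eqmod hp (hzs K)); apply/(exact_eqmod hp (hes K)).
  by apply/(exact_eqmod hp (hes K)); apply/(mexact_eqmod hp (hzs K)).
have Rtot : forall x, exists z, R x z.
  move=> x; have [M hM] := hG x.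
  have [i hi] : exists i, x = es M *+ i.
    by apply: (cyc_sub hs (hes M)); rewrite expnSr mulrnA hM mul0rn.
  by exists (zs M ^+ i), M, i.
pose f x := epsilon (inhabits (0 : algC)) (R x).
have hf : forall x, R x (f x).
  by move=> x; apply: epsilon_spec; apply: Rtot.
exists f; split.
- move=> x y; apply/(Req (x + y) (x + y) _ _ (hf (x + y))) => //.
  have [n [i [ex ez]]] := hf x; have [m [j [ey ez']]] := hf y.
  have [K [a [b [e1 e2 e3 e4]]]] := Rlift n i m j.
  exists K, (a + b)%N; split.
    by rewrite ex ey e1 e3 mulrnDr.
  by rewrite ez ez' e2 e4 exprD.
- by move=> x y hxy; apply/(Req x y _ _ (hf x) (hf y)); rewrite hxy.
- move=> z; split.
    move=> [n hn].
    have hn1 : z ^+ (p ^ n.+1) = 1 by rewrite expnSr exprM hn expr1n.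
    have [i hi] := prim_rootP (mexact_prim hp (hzs n)) hn1.
    exists (es n *+ i); apply/(Req _ _ _ _ (hf (es n *+ i)) (_ : R (es n *+ i) z)) => //.
    by exists n, i.
  move=> [x <-]; have [n [i [_ ->]]] := hf x.
  exists n.+1; rewrite -exprM mulnC exprM.
  by case: (hzs n) => -> _; rewrite expr1n.
Qed.

End Fwd.

Lemma idem_central (G : zmodType) : End_centrally_essential G ->
  forall e r : G -> G, is_endo e -> is_endo r -> (forall x, e (e x) = e x) ->
  forall x, r (e x) = e (r (e x)).
Proof.
move=> hCE e r he hr hidem x; apply: NNPP => hx.
pose a := fun x => r (e x) - e (r (e x)).
have ha : is_endo a.
  move=> u v; rewrite /a he hr he; rewrite opprD addrACA //.
have hna : ~ endo_zero a.
  by move=> h; apply: hx; apply/eqP; rewrite -subr_eq0; apply/eqP; apply: h.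
have [X [Y [[hX cX] [hY cY] nX nY hXY]]] := hCE a ha hna.
apply: nY => v.
have ae : forall z, a (e z) = a z by move=> z; rewrite /a hidem.
have eY : forall z, e (a z) = 0.
  by move=> z; rewrite /a endoB // hidem subrr.
by rewrite -hXY -ae -cX // hXY cY // -hXY eY.
Qed.

Lemma aux1 (G : zmodType) (x y1 y2 : G) m1 m2 : y1 + x *+ m1 = y2 + x *+ m2 -> (m1 <= m2)%N ->
  y1 - y2 = x *+ (m2 - m1).
Proof.
move=> he hm.
have -> : y1 = y2 + (x *+ m2 - x *+ m1) by rewrite addrA -he addrK.
by rewrite mulrnBr // addrAC subrr add0r.
Qed.

Lemma aux2 (G : zmodType) (d c1 c2 : G) m1 m2 : c1 - c2 = d *+ (m2 - m1) -> (m1 <= m2)%N ->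
  c1 + d *+ m1 = c2 + d *+ m2.
Proof.
move=> hc hm; rewrite mulrnBr // in hc.
have -> : c1 = c2 + (d *+ m2 - d *+ m1) by rewrite -hc addrC subrK.
by rewrite -addrA subrK.
Qed.

Section Ext.
Variables (G D : zmodType) (p : nat) (S0 : G -> Prop) (f0 : G -> D) (T : D -> Prop).
Hypothesis hp : prime p.
Hypothesis hG : p_primary p G.
Hypothesis S00 : S0 0.
Hypothesis S0D : forall x y, S0 x -> S0 y -> S0 (x + y).
Hypothesis f0D : forall x y, S0 x -> S0 y -> f0 (x + y) = f0 x + f0 y.
Hypothesis f0T : forall x, S0 x -> T (f0 x).
Hypothesis T0 : T 0.
Hypothesis TD : forall a b, T a -> T b -> T (a + b).
Hypothesis Hdiv : forall (x : G) (b : D), T b ->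
  (forall m, S0 (x *+ p *+ m) -> f0 (x *+ p *+ m) = b *+ m) ->
  exists d, T d /\ d *+ p = b.

Definition good (g : G * D -> Prop) :=
  [/\ g (0, 0), forall x a b, g (x, a) -> g (x, b) -> a = b,
      forall x y a b, g (x, a) -> g (y, b) -> g (x + y, a + b),
      forall x, S0 x -> g (x, f0 x) & forall x a, g (x, a) -> T a].

Lemma TMn a m : T a -> T (a *+ m).
Proof. move=> ha; elim: m => [|m IH]; [by rewrite mulr0n | by rewrite mulrS; apply: TD]. Qed.

Section Good.
Variable g : G * D -> Prop.
Hypothesis hg : good g.

Lemma gMn x a m : g (x, a) -> g (x *+ m, a *+ m).
Proof.
case: hg => g0 _ gD _ _ hx; elim: m => [|m IH]; first by rewrite !mulr0n.
by rewrite !mulrS; apply: gD.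
Qed.

Lemma gfun x a b : g (x, a) -> g (x, b) -> a = b.
Proof. by case: hg => _ gf _ _ _; apply: gf. Qed.

Lemma gN x a : g (x, a) -> g (- x, - a).
Proof.
move=> hx; have [r hr] := hG x.
have h0 := gMn (p ^ r)%N hx; rewrite hr in h0.
have ha : a *+ (p ^ r) = 0 by apply: (gfun h0); case: hg.
have hpos : (0 < p ^ r)%N by rewrite expn_gt0 prime_gt0.
have -> : - x = x *+ (p ^ r).-1.
  by apply/eqP; rewrite eq_sym -subr_eq0 opprK -mulrSr prednK // hr.
have -> : - a = a *+ (p ^ r).-1.
  by apply/eqP; rewrite eq_sym -subr_eq0 opprK -mulrSr prednK // ha.
exact: gMn.
Qed.

Lemma gB x y a b : g (x, a) -> g (y, b) -> g (x - y, a - b).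
Proof. by move=> hx hy; case: hg => _ _ gD _ _; apply: gD => //; apply: gN. Qed.

End Good.

Lemma extend : exists f : G -> D, [/\ forall x y, f (x + y) = f x + f y,
   forall x, S0 x -> f x = f0 x & forall x, T (f x)].
Proof.
pose P (g : G * D -> Prop) := good g \/ (forall z, ~ g z).
have f00 : f0 0 = 0.
  by apply: (@addrI _ (f0 0)); rewrite addr0 -f0D ?addr0.
have chain : forall F : classical_sets.set (classical_sets.set (G * D)),
    classical_sets.subset F P ->
    classical_sets.total_on F classical_sets.subset ->
    P (classical_sets.bigcup F id).
  move=> F FP Ftot.
  have memg : forall X z, F X -> X z -> good X.
    by move=> X z FX Xz; case: (FP X FX) => // hemp; case: (hemp z).
  have two : forall X1 X2 z1 z2, F X1 -> F X2 -> X1 z1 -> X2 z2 ->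
      exists X, [/\ F X, X z1 & X z2].
    move=> X1 X2 z1 z2 F1 F2 h1 h2; case: (Ftot X1 X2 F1 F2) => hs.
      by exists X2; split=> //; apply: hs.
    by exists X1; split=> //; apply: hs.
  case: (classic (exists X, F X /\ good X)) => [[X0 [FX0 gX0]] | hno].
    left; split.
    - by exists X0 => //; case: gX0.
    - move=> x a b [X1 F1 h1] [X2 F2 h2].
      have [X [FX hXa hXb]] := two _ _ _ _ F1 F2 h1 h2.
      exact: (gfun (memg _ _ FX hXa) hXa hXb).
    - move=> x y a b [X1 F1 h1] [X2 F2 h2].
      have [X [FX hXa hXb]] := two _ _ _ _ F1 F2 h1 h2.
      exists X => //; by case: (memg _ _ FX hXa) => _ _ gD _ _; apply: gD.
    - by move=> x hx; exists X0 => //; case: gX0 => _ _ _ gS _; apply: gS.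
    - move=> x a [X FX hX]; by case: (memg _ _ FX hX) => _ _ _ _ gT; apply: (gT x).
  right=> z [X FX Xz]; apply: hno; exists X; split=> //; exact: (memg _ _ FX Xz).
have [A [PA maxA]] := classical_sets.Zorn_bigcup chain.
pose g0 (z : G * D) := S0 z.1 /\ z.2 = f0 z.1.
have gg0 : good g0.
  split.
  - by split=> //=; rewrite f00.
  - by move=> x a b [_ /= ->] [_ /= ->].
  - move=> x y a b [hx /= ->] [hy /= ->]; split=> /=; [exact: S0D | by rewrite f0D].
  - by move=> x hx; split.
  - by move=> x a [hx /= ->]; apply: f0T.
have gA : good A.
  case: PA => // hemp; exfalso; apply: (maxA g0); last by left.
  split; first by move=> z hz; case: (hemp z).
  by move=> h; apply: (hemp (0, f0 0)); apply: h; split.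
have A0 : A (0, 0) by case: gA.
have dom : forall x, exists a, A (x, a).
  move=> x; apply: NNPP => hx.
  have [n hn] := hG x.
  have [k [hk hmin]] := @ex_min (fun k => exists a, A (x *+ (p ^ k), a))
       (ex_intro _ n (ex_intro _ 0 (eq_ind_r (fun u => A (u, 0)) A0 hn))).
  case: k hk hmin => [|k] hk hmin.
    by apply: hx; move: hk; rewrite expn0 mulr1n.
  pose x' := x *+ (p ^ k).
  have hx' : ~ exists a, A (x', a) by apply: hmin.
  have [b hb] : exists b, A (x' *+ p, b) by rewrite /x' -mulrnA -expnSr.
  have Tb : T b by case: gA => _ _ _ _ gT; apply: gT hb.
  have [d [Td hd]] : exists d, T d /\ d *+ p = b.
    apply: (@Hdiv x' b Tb) => m hm.
    have hs : A (x' *+ p *+ m, f0 (x' *+ p *+ m)).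
      by case: gA => _ _ _ gS _; apply: gS.
    exact: (gfun gA hs (gMn gA m hb)).
  have K : forall j c, A (x' *+ j, c) -> c = d *+ j.
    move=> j c hj; case: (boolP (p %| j)%N) => [/dvdnP [i ei]| hnd].
      move: hj; rewrite ei mulnC mulrnA => hj.
      by rewrite (gfun gA hj (gMn gA i hb)) -hd -mulrnA.
    exfalso; apply: hx'.
    have [r hr] := hG x'.
    have jpos : (0 < j)%N by case: j hnd hj => //; rewrite dvdn0.
    have hc : coprime j (p ^ r) by rewrite coprime_sym coprimeXl // prime_coprime.
    have [km kn E _] := egcdnP (p ^ r)%N jpos.
    move: E; rewrite (eqP hc) => E.
    exists (c *+ km); have := gMn gA km hj; rewrite -mulrnA mulnC E.
    by rewrite mulrnDr (mulnC kn) mulrnA hr mul0rn add0r mulr1n.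
  pose B (z : G * D) := exists y a m, A (y, a) /\ z = (y + x' *+ m, a + d *+ m).
  have key : forall y1 c1 m1 y2 c2 m2, A (y1, c1) -> A (y2, c2) -> (m1 <= m2)%N ->
      y1 + x' *+ m1 = y2 + x' *+ m2 -> c1 + d *+ m1 = c2 + d *+ m2.
    move=> y1 c1 m1 y2 c2 m2 h1 h2 hm he.
    have e1 : y1 - y2 = x' *+ (m2 - m1) by apply: aux1.
    have := K _ _ (eq_ind _ (fun u => A (u, c1 - c2)) (gB gA h1 h2) _ e1).
    by move=> hc; apply: aux2.
  have gB' : good B.
    split.
    - by exists 0, 0, 0%N; split; [exact: A0 | rewrite !mulr0n !addr0].
    - move=> x1 a1 a2 [y1 [c1 [m1 [h1 [-> ->]]]]] [y2 [c2 [m2 [h2 [e ->]]]]].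
      case: (leqP m1 m2) => hm; first exact: (key _ _ _ _ _ _ h1 h2 hm).
      by apply/esym; apply: (key _ _ _ _ _ _ h2 h1 (ltnW hm)).
    - move=> x1 x2 a1 a2 [y1 [c1 [m1 [h1 [-> ->]]]]] [y2 [c2 [m2 [h2 [-> ->]]]]].
      exists (y1 + y2), (c1 + c2), (m1 + m2)%N; split.
        by case: gA => _ _ gD _ _; apply: gD.
      by rewrite !mulrnDr (addrACA y1) (addrACA c1).
    - move=> x1 hx1; exists x1, (f0 x1), 0%N; split; last by rewrite !mulr0n !addr0.
      by case: gA => _ _ _ gS _; apply: gS.
    - move=> x1 a [y [c [m [h [_ ->]]]]]; apply: TD; last exact: TMn.
      by case: gA => _ _ _ _ gT; apply: gT h.
  apply: (maxA B); last by left.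
  split.
    by move=> [y a] h; exists y, a, 0%N; split; [exact: h | rewrite !mulr0n !addr0].
  move=> h; apply: hx'; exists d; apply: h.
  by exists 0, 0, 1%N; split; [exact: A0 | rewrite !add0r].
pose f x := epsilon (inhabits (0 : D)) (fun a => A (x, a)).
have hf : forall x, A (x, f x).
  by move=> x; exact: (epsilon_spec (inhabits (0 : D)) (fun a => A (x, a)) (dom x)).
exists f; split.
- move=> x y; apply: (gfun gA (hf (x + y))).
  by case: gA => _ _ gD _ _; apply: gD.
- move=> x hx; apply: (gfun gA (hf x)).
  by case: gA => _ _ _ gS _; apply: gS.
- by move=> x; case: gA => _ _ _ _ gT; apply: (gT x); apply: hf.
Qed.

End Ext.

Lemma modeq_mulrn (G : zmodType) (x : G) N a b : x *+ N = 0 ->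
  (a = b %[mod N])%N -> x *+ a = x *+ b.
Proof. by move=> hN h; rewrite (mulrn_mod a hN) (mulrn_mod b hN) h. Qed.

Lemma caseA (G : zmodType) p : prime p -> p_primary p G -> End_centrally_essential G ->
  (forall x : G, exists y, x = y *+ p) -> soc1 G p.
Proof.
move=> hp hG hCE hdiv s t hs ht hs0; apply: NNPP => hno.
pose h (e : G) := epsilon (inhabits (0 : G)) (fun y => y *+ p = e).
have hh : forall e, h e *+ p = e.
  move=> e; apply: (epsilon_spec (inhabits (0 : G)) (fun y => y *+ p = e)).
  by have [y ->] := hdiv e; exists y.
pose es := nat_rect (fun _ => G) s (fun _ e => h e).
have hesp : forall n, es n.+1 *+ p = es n by move=> n; exact: hh.
have es_lift : forall n k, es n = es (k + n)%N *+ p ^ k.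
  move=> n; elim=> [|k IH]; first by rewrite expn0 mulr1n.
  have -> : (k.+1 + n = (k + n).+1)%N by [].
  by rewrite IH -(hesp (k + n)%N) expnS mulrnA mulrnAC.
have esn : forall n, es n *+ p ^ n = s.
  by move=> n; have := es_lift 0%N n; rewrite addn0 => <-.
have exn : forall n, exact p n (es n).
  move=> n; split; last by rewrite esn; apply/eqP.
  by rewrite expnSr mulrnA esn.
pose Dset (y : G) := exists n m, y = es n *+ m.
have D0 : Dset 0 by exists 0%N, 0%N; rewrite mulr0n.
have DD : forall y1 y2, Dset y1 -> Dset y2 -> Dset (y1 + y2).
  move=> y1 y2 [n1 [m1 ->]] [n2 [m2 ->]].
  exists (n2 + n1)%N, (p ^ n2 * m1 + p ^ n1 * m2)%N.
  rewrite mulrnDr {1}(es_lift n1 n2) {1}(es_lift n2 n1) addnC !mulrnA.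
  by rewrite addnC.
have Ddiv : forall b, Dset b -> exists d, Dset d /\ d *+ p = b.
  move=> b [n [m ->]]; exists (es n.+1 *+ m); split; first by exists n.+1, m.
  by rewrite mulrnAC hesp.
have Dsoc : forall y, Dset y -> y *+ p = 0 -> exists i, y = s *+ i.
  move=> y [n [m ->]] hy.
  have : (p ^ n.+1 %| m * p)%N by apply/(exact_dvd hp (exn n)); rewrite mulrnA.
  rewrite expnSr dvdn_pmul2r ?prime_gt0 // => /dvdnP [i ->].
  by exists i; rewrite mulnC mulrnA esn.
have [pi [piD piS piT]] := extend (S0 := Dset) (f0 := id) (T := Dset) hp hG D0 DD
   (fun x y _ _ => erefl) (fun x hx => hx) D0 DD (fun x b Tb _ => Ddiv b Tb).
pose f1 (y : G) := t *+ (epsilon (inhabits 0%N) (fun i => y = s *+ i)).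
have exs : exact p 0 s by apply: exn.
have f1s : forall i, f1 (s *+ i) = t *+ i.
  move=> i; rewrite /f1.
  have := epsilon_spec (inhabits 0%N) (fun j => s *+ i = s *+ j) (ex_intro _ i erefl).
  set j := epsilon _ _ => hj.
  apply: (@modeq_mulrn _ t (p ^ 1)%N); first by rewrite expn1.
  by apply/esym; apply/(exact_eqmod hp exs).
pose S1 (y : G) := exists i, y = s *+ i.
have S10 : S1 0 by exists 0%N; rewrite mulr0n.
have S1D : forall x y, S1 x -> S1 y -> S1 (x + y).
  by move=> x y [i ->] [j ->]; exists (i + j)%N; rewrite mulrnDr.
have f1D : forall x y, S1 x -> S1 y -> f1 (x + y) = f1 x + f1 y.
  by move=> x y [i ->] [j ->]; rewrite -mulrnDr !f1s mulrnDr.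
have Hd1 : forall (x : G) (b : G), True ->
    (forall m, S1 (x *+ p *+ m) -> f1 (x *+ p *+ m) = b *+ m) ->
    exists d, True /\ d *+ p = b.
  by move=> x b _ _; have [y ->] := hdiv b; exists y.
have [r [rD rS _]] := extend (S0 := S1) (f0 := f1) (T := fun _ => True) hp hG S10 S1D f1D
   (fun _ _ => I) I (fun _ _ _ _ => I) Hd1.
have rs : r s = t.
  by have := rS (s *+ 1) (ex_intro _ 1%N erefl); rewrite f1s !mulr1n.
have := idem_central hCE (e := pi) (r := r) piD rD (fun x => piS _ (piT x)) s.
have pis : pi s = s by apply: piS; exists 0%N, 1%N; rewrite mulr1n.
rewrite pis rs => ht'.
have Dt : Dset t by rewrite ht'; apply: piT.
by apply: hno; apply: Dsoc.
Qed.

Lemma Zp_mulrnD (G : zmodType) (x : G) q (a b : 'Z_q) : (1 < q)%N -> x *+ q = 0 ->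
  x *+ nat_of_ord (a + b) = x *+ nat_of_ord a + x *+ nat_of_ord b.
Proof.
move=> hq hx.
have eq0 : x *+ (Zp_trunc q).+2 = 0 by rewrite Zp_cast.
by rewrite /= -(mulrn_mod _ eq0) mulrnDr.
Qed.

Lemma Zp_mulrn_nat (G : zmodType) (x : G) q k : (1 < q)%N -> x *+ q = 0 ->
  x *+ nat_of_ord (k%:R : 'Z_q) = x *+ k.
Proof.
move=> hq hx; rewrite val_Zp_nat //; apply/esym; exact: mulrn_mod.
Qed.

Lemma inv_soc (G : zmodType) p (w s : G) i : prime p -> w *+ p = 0 -> s = w *+ i -> s != 0 ->
  exists i', w = s *+ i'.
Proof.
move=> hp hw hs hs0.
have hnd : ~~ (p %| i)%N.
  apply/negP => /dvdnP [k ek]; move: hs0; rewrite hs ek mulnC mulrnA hw mul0rn eqxx //.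
have ipos : (0 < i)%N by case: i hs hnd => //; rewrite dvdn0.
have hc : coprime i p by rewrite coprime_sym prime_coprime.
have [km kn E _] := egcdnP p ipos.
move: E; rewrite (eqP hc) => E.
exists km; rewrite hs -mulrnA mulnC E mulrnDr mulnC mulrnA hw mul0rn add0r mulr1n //.
Qed.

Lemma caseB (G : zmodType) p : prime p -> p_primary p G -> End_centrally_essential G ->
  (exists x : G, forall y, x <> y *+ p) -> soc1 G p.
Proof.
move=> hp hG hCE [g0 hg0] s t hs ht hs0; apply: NNPP => hno.
pose H (y : G) k := exists z, y = z *+ (p ^ k).
have [w [hw hk]] : exists w, w *+ p = 0 /\ exists k, ~ H w k.
  apply: NNPP => hall.
  have allH : forall w, w *+ p = 0 -> forall k, H w k.
    move=> w hw k; apply: NNPP => hn; apply: hall; exists w; split=> //; by exists k.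
  have ind : forall n y, y *+ (p ^ n) = 0 -> H y 1.
    elim=> [|n IH] y hy.
      by exists 0; rewrite mul0rn; move: hy; rewrite expn0 mulr1n.
    have hw' : (y *+ p ^ n) *+ p = 0 by rewrite -mulrnA -expnSr.
    have [z hz] := allH _ hw' n.+1.
    have [z' hz'] : H (y - z *+ p) 1.
      apply: IH; rewrite mulrnBl hz -mulrnA -expnS subrr //.
    by exists (z + z'); rewrite mulrnDl -hz' expn1 addrC subrK.
  have [n hn] := hG g0.
  have [z hz] := ind n g0 hn.
  by apply: (hg0 z); rewrite hz expn1.
have [k0 [hk0 hmin]] := ex_min hk.
case: k0 hk0 hmin => [|n] hk0 hmin.
  by apply: hk0; exists w; rewrite expn0 mulr1n.
have [c hc] : H w n by apply: NNPP => h; apply: (hmin n (ltnSn n)).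
have w0 : w != 0.
  by apply/eqP => w0; apply: hk0; exists 0; rewrite w0 mul0rn.
have exc : exact p n c.
  split; first by rewrite expnSr mulrnA -hc.
  by rewrite -hc; apply/eqP.
set q := (p ^ n.+1)%N.
have hq : (1 < q)%N by rewrite /q -(expn0 p) ltn_exp2l ?prime_gt1.
have Int : forall m z, c *+ m = z *+ q -> c *+ m = 0.
  move=> m z hm; apply: NNPP => hne.
  have mpos : (0 < m)%N by case: m hm hne => //; rewrite mulr0n.
  have : (gcdn m q %| p ^ n.+1)%N by apply: dvdn_gcdr.
  case/(dvdn_pfactor _ _ hp) => i hi hg.
  move: hi; rewrite leq_eqVlt => /orP [/eqP ei| hi].
    apply: hne; apply/(exact_dvd hp exc).
    by rewrite -ei -hg dvdn_gcdl.
  have [km kn E _] := egcdnP q mpos.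
  move: E; rewrite hg => E.
  have hci : c *+ p ^ i = z *+ km *+ q.
    have := f_equal (fun u => u *+ km) hm.
    rewrite -mulrnA mulnC E mulrnDr mulnC mulrnA.
    by case: exc => -> _; rewrite mul0rn add0r mulrnAC.
  apply: hk0; exists (z *+ km *+ p ^ (n - i)).
  rewrite hc.
  have -> : (p ^ n = p ^ i * p ^ (n - i))%N by rewrite -expnD subnKC.
  by rewrite mulrnA hci mulrnAC.
have modq : forall i j z z', c *+ i + z *+ q = c *+ j + z' *+ q -> (i = j %[mod q])%N.
  suff H1 : forall i j z z', (i <= j)%N -> c *+ i + z *+ q = c *+ j + z' *+ q ->
      (i = j %[mod q])%N.
    move=> i j z z' e; case: (leqP i j) => hij; first exact: (H1 _ _ _ _ hij e).
    by apply/esym; apply: (H1 _ _ _ _ (ltnW hij) (esym e)).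
  move=> i j z z' hij e.
  have e2 : z *+ q + c *+ i = z' *+ q + c *+ j by rewrite addrC e addrC.
  have e3 := aux1 e2 hij.
  have : c *+ (j - i) = (z - z') *+ q by rewrite -e3 mulrnBl.
  move/Int => h0.
  apply/eqP; rewrite eq_sym eqn_mod_dvd //.
  exact: (proj1 (exact_dvd hp exc (j - i)%N) h0).
pose f2 (y : G) := ((epsilon (inhabits 0%N)
    (fun i => exists z, y = c *+ i + z *+ q))%:R : 'Z_q).
have f2v : forall i z, f2 (c *+ i + z *+ q) = i%:R.
  move=> i z; rewrite /f2.
  have := epsilon_spec (inhabits 0%N)
    (fun j => exists z', c *+ i + z *+ q = c *+ j + z' *+ q)
    (ex_intro _ i (ex_intro _ z erefl)).
  set j := epsilon _ _ => [[z' hz']].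
  rewrite -(Zp_nat_mod hq j) -(Zp_nat_mod hq i); congr (_%:R).
  by apply/esym; exact: (modq _ _ _ _ hz').
pose S2 (y : G) := exists i z, y = c *+ i + z *+ q.
have S20 : S2 0 by exists 0%N, 0; rewrite mulr0n mul0rn addr0.
have S2D : forall x y, S2 x -> S2 y -> S2 (x + y).
  move=> x y [i1 [z1 ->]] [i2 [z2 ->]]; exists (i1 + i2)%N, (z1 + z2).
  by rewrite mulrnDr mulrnDl (addrACA (c *+ i1)).
have f2D : forall x y, S2 x -> S2 y -> f2 (x + y) = f2 x + f2 y.
  move=> x y [i1 [z1 ->]] [i2 [z2 ->]].
  by rewrite (addrACA (c *+ i1)) -mulrnDr -mulrnDl !f2v natrD.
have Hd2 : forall (x : G) (b : 'Z_q), True ->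
    (forall m, S2 (x *+ p *+ m) -> f2 (x *+ p *+ m) = b *+ m) ->
    exists d, True /\ d *+ p = b.
  move=> x b _ hb.
  have ex : x *+ p *+ p ^ n = c *+ 0 + x *+ q by rewrite mulr0n add0r -mulrnA -expnS.
  have hb0 : b *+ p ^ n = 0.
    have := hb (p ^ n)%N (ex_intro _ 0%N (ex_intro _ x ex)).
    by rewrite ex f2v => <-.
  have : (q %| nat_of_ord b * p ^ n)%N.
    have := f_equal (fun u : 'Z_q => nat_of_ord u) hb0.
    rewrite -[b in b *+ _]natr_Zp -mulrnA val_Zp_nat // => h.
    by rewrite /dvdn h.
  move=> hd0.
  have hd : (p ^ n * p %| p ^ n * nat_of_ord b)%N by rewrite -expnSr mulnC.
  move: hd; rewrite dvdn_pmul2l ?expn_gt0 ?prime_gt0 //.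
  move=> /dvdnP [k ek]; exists (k%:R); split=> //.
  by rewrite -mulrnA -ek natr_Zp.
have [chi [chiD chiS _]] := extend (S0 := S2) (f0 := f2) (T := fun _ => True)
   hp hG S20 S2D f2D (fun _ _ => I) I (fun _ _ _ _ => I) Hd2.
have chic : chi c = 1.
  have := chiS (c *+ 1 + 0 *+ q) (ex_intro _ 1%N (ex_intro _ 0 erefl)).
  by rewrite f2v mul0rn addr0 mulr1n.
have hcq : c *+ q = 0 by case: exc.
pose pi x := c *+ nat_of_ord (chi x).
have piD : is_endo pi by move=> x y; rewrite /pi chiD Zp_mulrnD.
have piMn : forall k, pi (c *+ k) = c *+ k.
  by move=> k; rewrite /pi (addfMn _ _ chiD) chic Zp_mulrn_nat.
have pidem : forall x, pi (pi x) = pi x by move=> x; exact: piMn.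
have pic : pi c = c by have := piMn 1%N; rewrite mulr1n.
have [u [hu hun]] : exists u : G, u *+ p = 0 /\ ~ exists i, u = w *+ i.
  case: (classic (exists i, t = w *+ i)) => [[j hj]|htw]; last by exists t.
  exists s; split=> // [[i hi]].
  have [i' hi'] := inv_soc hp hw hi hs0.
  by apply: hno; exists (i' * j)%N; rewrite hj hi' mulrnA.
pose v := u - pi u.
have hvp : v *+ p = 0.
  by rewrite /v mulrnBl hu -(endoMn u p piD) hu (endo0 piD) subrr.
have hv0 : v != 0.
  apply/eqP => hv.
  have hu' : u = c *+ nat_of_ord (chi u) by apply/eqP; rewrite -subr_eq0; apply/eqP.
  have : (p ^ n.+1 %| nat_of_ord (chi u) * p)%N.
    by apply/(exact_dvd hp exc); rewrite mulrnA -hu'.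
  rewrite expnSr dvdn_pmul2r ?prime_gt0 // => /dvdnP [i ei].
  by apply: hun; exists i; rewrite hu' ei mulnC mulrnA -hc.
have piv : pi v = 0 by rewrite /v (endoB _ _ piD) pidem subrr.
have hvq : v *+ q = 0 by rewrite /q expnS mulrnA hvp mul0rn.
pose r x := v *+ nat_of_ord (chi x).
have rD : is_endo r by move=> x y; rewrite /r chiD Zp_mulrnD.
have rc : r c = v.
  have v1 : nat_of_ord (1 : 'Z_q) = 1%N by rewrite /= modn_small.
  by rewrite /r chic v1 mulr1n.
have := idem_central hCE (e := pi) (r := r) piD rD pidem c.
rewrite pic rc piv => hv.
by move: hv0; rewrite hv eqxx.
Qed.

Theorem lemma2p3 (p : nat) (G : zmodType) :
  prime p -> p_primary p G -> (exists x : G, x != 0%R) ->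
  (End_centrally_essential G <->
   ((exists k : nat, (0 < k)%N /\ iso_Zpk p k G) \/ iso_Zpinf p G)).
Proof.
move=> hp hG hnz; split; last exact: back_dir.
move=> hCE.
have hs : soc1 G p.
  case: (classic (forall x : G, exists y, x = y *+ p)) => hdiv.
    exact: caseA.
  apply: (caseB hp hG hCE).
  apply: NNPP => hno; apply: hdiv => x; apply: NNPP => hx; apply: hno.
  by exists x => y hy; apply: hx; exists y.
case: (classic (exists N, forall x : G, x *+ (p ^ N) = 0)) => hb.
  by left; exact: (bounded_case hp hG hs hnz hb).
right; apply: (unbounded_case hp hG hs) => // N.
apply: NNPP => hno; apply: hb; exists N => x; apply: NNPP => hx; apply: hno.
by exists x.
Qed.
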